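(* Let $(\mathbf{X},\mathbf{p})$ be a $\{1,k\}$-payment equilibrium and let $z<k$ be an integer such that: agents in $N_L$ are $(2-1/k)$-EFX towards each other; $p(X_j)\in[z,k+z]$ for all $j\in N_L$; and $p(X_i)\in[k,k+z]$ for all $i\in N_H$. If some agent $i$ is not $(2-1/k)$-EFX towards another agent $j$, then $i\in N_H$, $j\in N_L$, $\alpha_i=1$, and $X_j\subseteq\mathsf{MPB}_i$.
   Context: Fix $k>1$. Agents $N$, chores $M$, additive costs $c_i(e)\in\{1,k\}$; as a standing assumption every agent $i$ has at least one item $e$ with $c_i(e)=1$. An allocation $\mathbf{X}$ partitions $M$ into bundles $X_i$. A payment vector assigns $p(e)>0$, $p(X)=\sum_{e\in X}p(e)$; $\alpha_{i,e}=c_i(e)/p(e)$, $\alpha_i=\min_{e\in M}\alpha_{i,e}$, $\mathsf{MPB}_i=\{e:\alpha_{i,e}=\alpha_i\}$; $(\mathbf{X},\mathbf{p})$ is a $\{1,k\}$-payment equilibrium if $X_i\subseteq\mathsf{MPB}_i$ for all $i$ and $p(e)\in\{1,k\}$ for all $e$. $L=\{e:p(e)=1\}$, $H=\{e:p(e)=k\}$, $N_L=\{i:X_i\subseteq L\}$, $N_H=\{i:|X_i\cap H|\ge1\}$. Agent $i$ is $\beta$-EFX towards $j$ if $X_i=\emptyset$ or $c_i(X_i\setminus\{e\})\le\beta\,c_i(X_j)$ for all $e\in X_i$. *)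

(* Defs.v *)
From mathcomp Require Import all_boot all_order all_algebra.
Set Implicit Arguments. Unset Strict Implicit. Unset Printing Implicit Defensive.
Import Order.TTheory GRing.Theory Num.Theory.
Local Open Scope ring_scope.

Section Defs.
Variables (R : realFieldType) (N M : finType).
Variables (k : R) (c : N -> M -> R) (X : N -> {set M}) (p : M -> R).

Definition cost (i : N) (A : {set M}) : R := \sum_(e in A) c i e.
Definition pay (A : {set M}) : R := \sum_(e in A) p e.

Definition alpha (i : N) (e : M) : R := c i e / p e.

(* alpha_i = min_{e in M} alpha_{i,e} (M nonempty; 0 is a dummy if M is empty) *)
Definition alpha_min (i : N) : R :=
  match [pick e : M] with
  | Some e0 => \big[Num.min/alpha i e0]_(e : M) alpha i e
  | None => 0
  end.

Definition MPB (i : N) : {set M} := [set e | alpha i e == alpha_min i].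

Definition is_allocation : Prop :=
  (forall i j, i != j -> [disjoint X i & X j]) /\ (forall e : M, exists i, e \in X i).

Definition payment_equilibrium : Prop :=
  is_allocation /\ (forall i, X i \subset MPB i) /\ (forall e, p e = 1 \/ p e = k).

Definition Lset : {set M} := [set e | p e == 1].
Definition Hset : {set M} := [set e | p e == k].
Definition N_L : {set N} := [set i | X i \subset Lset].
Definition N_H : {set N} := [set i | 1 <= #|X i :&: Hset|]%N.

Definition EFX (beta : R) (i j : N) : Prop :=
  X i = set0 \/ forall e, e \in X i -> cost i (X i :\ e) <= beta * cost i (X j).

End Defs.

(* Main.v *)
Require Import Defs.
From mathcomp Require Import all_boot all_order all_algebra.
From mathcomp Require Import ring lra.
Import Order.TTheory GRing.Theory Num.Theory.
Local Open Scope ring_scope.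

Lemma amin_le (R : realFieldType) (N M : finType) (c : N -> M -> R) (p : M -> R) i e :
  alpha_min c p i <= alpha c p i e.
Proof.
rewrite /alpha_min; case: pickP => [e0 _|/(_ e)//].
by rewrite (bigD1 e) //= ge_min lexx.
Qed.

Lemma amin_att (R : realFieldType) (N M : finType) (c : N -> M -> R) (p : M -> R) i (e1 : M) :
  exists e, alpha_min c p i = alpha c p i e.
Proof.
rewrite /alpha_min; case: pickP => [e0 _|/(_ e1)//].
elim/big_ind: _ => [|x y [ex ->] [ey ->]|x _]; [by exists e0| |by exists x].
by case: (leP (alpha c p i ex) (alpha c p i ey)) => _; [exists ex|exists ey].
Qed.

Lemma sum_D1 (R : realFieldType) (M : finType) (f : M -> R) (A : {set M}) e :
  e \in A -> \sum_(x in A) f x = f e + \sum_(x in A :\ e) f x.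
Proof. by move=> he; rewrite (big_setD1 e he). Qed.

Theorem lemma9 (R : realFieldType) (N M : finType) (k : R)
  (c : N -> M -> R) (X : N -> {set M}) (p : M -> R) (z : int) :
  1 < k ->
  (forall i e, c i e = 1 \/ c i e = k) ->
  (forall i, exists e, c i e = 1) ->
  payment_equilibrium k c X p ->
  z%:~R < k ->
  (forall i j, i \in N_L X p -> j \in N_L X p -> i != j ->
     EFX c X (2 - k^-1) i j) ->
  (forall j, j \in N_L X p -> z%:~R <= pay p (X j) <= k + z%:~R) ->
  (forall i, i \in N_H k X p -> k <= pay p (X i) <= k + z%:~R) ->
  forall i j, i != j -> ~ EFX c X (2 - k^-1) i j ->
    [/\ i \in N_H k X p, j \in N_L X p, alpha_min c p i = 1 & X j \subset MPB c p i].
Proof.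
move=> hk hc hc1 [_ [hmpb hp]] hz hL hpL hpH i j hij hnE.
set zz : R := z%:~R in hz hpL hpH *.
set b := k^-1.
have hk0 : 0 < k by lra.
have hbk : b * k = 1 by rewrite mulVf // gt_eqF.
have hb0 : 0 < b by rewrite invr_gt0.
have hb1 : b < 1 by rewrite invf_lt1.
have hp0 e : 0 < p e by case: (hp e) => ->; lra.
set a := alpha_min c p i.
have cX e : e \in X i -> c i e = a * p e.
  move=> /(subsetP (hmpb i)); rewrite inE -/a => /eqP <-.
  by rewrite /alpha mulfVK // gt_eqF.
have cge e : a * p e <= c i e.
  by rewrite -ler_pdivlMr // -/(alpha c p i e) amin_le.
have [e1 he1] := hc1 i.
have ha : a = 1 \/ a = b.
  have [e hae] := (@amin_att _ _ _ c p i e1); rewrite /a hae.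
  have h2 := @amin_le _ _ _ c p i e1; rewrite hae /alpha he1 in h2.
  rewrite /alpha in h2 *.
  case: (hc i e) h2 => ->; case: (hp e) => ->; rewrite ?divr1 ?divff ?gt_eqF //; try by left.
  - by right; rewrite mul1r.
  - case: (hp e1) => -> h2; exfalso; rewrite ?divr1 in h2.
    + lra.
    + have : k^-1 < 1 by []. lra.
have ha0 : 0 < a by case: ha => ->.
have costXi e : e \in X i -> cost c i (X i :\ e) = a * (pay p (X i) - p e).
  move=> he; rewrite /pay (@sum_D1 _ _ _ _ _ he) addrC addKr mulr_sumr.
  apply: eq_bigr => x; rewrite inE => /andP [_ hx]; exact: cX.
have costge A : a * pay p A <= cost c i A.
  rewrite /pay mulr_sumr; apply: ler_sum => x _; exact: cge.
have pe1 e : 1 <= p e by case: (hp e) => ->; lra.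
have NHP l : reflect (exists2 e, e \in X l & p e = k) (l \in N_H k X p).
  rewrite inE card_gt0; apply: (iffP (set0Pn _)) => [[e]|[e he hpe]].
    by rewrite !inE => /andP [he /eqP]; exists e.
  by exists e; rewrite !inE he hpe eqxx.
have nNH l : l \notin N_H k X p -> l \in N_L X p.
  move=> hn; rewrite inE; apply/subsetP => e he; rewrite inE.
  case: (hp e) => [->//|hpe]; case/negP: hn; apply/NHP; by exists e.
have eqN_L l : l \in N_L X p -> forall e, e \in X l -> p e = 1.
  by rewrite inE => /subsetP h e /h; rewrite inE => /eqP.
have key : pay p (X i) <= k + zz -> k <= pay p (X j) -> False.
  move=> h1 h2; apply: hnE; right => e he; rewrite costXi //.
  have := costge (X j); have := pe1 e; rewrite -/b => h3 h4.
  have hb2 : 0 <= 2 - b by lra.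
  have s1 : a * (pay p (X i) - p e) <= a * (2 * k - 1) by rewrite ler_pM2l //; lra.
  have s2 : a * (2 * k - 1) = (2 - b) * (a * k) by rewrite -[X in 2 * k - X]hbk; ring.
  have s3 : (2 - b) * (a * k) <= (2 - b) * (a * pay p (X j)).
    by apply: ler_wpM2l => //; rewrite ler_pM2l.
  have s4 : (2 - b) * (a * pay p (X j)) <= (2 - b) * cost c i (X j) by apply: ler_wpM2l.
  lra.
have hiH : i \in N_H k X p.
  apply/negPn/negP => hn; have hiL := nNH _ hn.
  case: (boolP (j \in N_H k X p)) => hj.
    by apply: key; [case/andP: (hpL _ hiL) | case/andP: (hpH _ hj)].
  exact: hnE (hL _ _ hiL (nNH _ hj) hij).
have [hi1 hi2] := andP (hpH _ hiH).
have hjL : j \in N_L X p.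
  case: (boolP (j \in N_H k X p)) => hj; last exact: nNH.
  by exfalso; apply: key => //; case/andP: (hpH _ hj).
have [hj1 hj2] := andP (hpL _ hjL).
have costj : pay p (X j) <= cost c i (X j).
  rewrite /pay /cost; apply: ler_sum => x hx; rewrite (eqN_L _ hjL _ hx).
  by case: (hc i x) => ->; lra.
have ha1 : a = 1.
  case: ha => // hab; exfalso; apply: hnE; right => e he.
  have hpe : p e = k.
    have := cX _ he; rewrite hab.
    case: (hc i e) => ->; case: (hp e) => -> //; nra.
  rewrite costXi // hpe hab.
  have hz0 : 0 <= zz by lra.
  have s1 : b * (pay p (X i) - k) <= b * zz by rewrite ler_pM2l //; lra.
  have s2 : b * zz <= zz by rewrite ler_piMl // ltW.
  have s3 : zz <= (2 - b) * zz by rewrite ler_peMl //; lra.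
  have s4 : (2 - b) * zz <= (2 - b) * cost c i (X j) by apply: ler_wpM2l; lra.
  rewrite -/b; lra.
split => //.
apply/subsetP => e' he'; rewrite inE -/a ha1.
case: (boolP (alpha c p i e' == 1)) => // hne; exfalso.
apply: hnE; right => e he; rewrite costXi // ha1 mul1r.
have hce : c i e' = k.
  case: (hc i e') => // h1; move: hne; rewrite /alpha h1 (eqN_L _ hjL _ he') divr1 eqxx //.
have : cost c i (X j) >= k + zz - 1.
  rewrite /cost (@sum_D1 _ _ _ _ _ he') hce.
  have := costge (X j :\ e'); rewrite ha1 mul1r /pay => h.
  have : pay p (X j) = p e' + pay p (X j :\ e') by rewrite /pay (@sum_D1 _ _ _ _ _ he').
  rewrite (eqN_L _ hjL _ he') /pay => h'.
  move: hj1; rewrite /pay /cost in h *; lra.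
have := pe1 e; rewrite -/b => h5 h6.
have : 1 <= 2 - b by lra.
nra.
Qed.
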